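(* For all $n,m\in\mathbb{N}$, \[ \sum_{j=0}^{n}\sum_{i=0}^{j}\frac{\binom{2n+2-m}{i}}{\binom{2n+1}{j}}=\frac{n+1}{2^{m+1}}\left(2H_{2n+1}-H_n-\sum_{k=1}^{m}\frac{2^{k+1}}{k}\left(\frac{\binom{2n+2-k}{n+1}}{\binom{2n+2}{n+1}}-1\right)\right). \]
   Context: For $x\in\mathbb{C}$ (in particular any integer $x$, possibly negative) and $i\in\mathbb{N}$: $\binom{x}{i}=x(x-1)\cdots(x-i+1)/i!$. $H_n=\sum_{k=1}^{n}\frac1k$ is the $n$-th harmonic number ($H_0=0$). Empty sums are $0$. *)

(* Defs.v *)
From HB Require Import structures.
From mathcomp Require Import all_boot all_order all_algebra.
Set Implicit Arguments. Unset Strict Implicit. Unset Printing Implicit Defensive.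
Import Order.TTheory GRing.Theory Num.Theory.
Local Open Scope ring_scope.

Definition binomz (x : int) (i : nat) : rat :=
  (\prod_(j < i) (x - (j%:Z))%:~R) / (i`!)%:R.

Definition harm (n : nat) : rat := \sum_(1 <= k < n.+1) (k%:R)^-1.

(* Main.v *)
Require Import Defs.
From HB Require Import structures.
From mathcomp Require Import all_boot all_order all_algebra.
From mathcomp Require Import ring lra zify.
Import Order.TTheory GRing.Theory Num.Theory.
Local Open Scope ring_scope.

Definition cb (n k : nat) : rat := ('C(n, k))%:R.

Lemma fact_neq0 n : (n`!)%:R != 0 :> rat.
Proof. by rewrite pnatr_eq0 -lt0n fact_gt0. Qed.

Lemma nat1_neq0 n : (n.+1)%:R != 0 :> rat.
Proof. by rewrite pnatr_eq0. Qed.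

Lemma onep_neq0 (i : nat) : (1 + i%:R) != 0 :> rat.
Proof. have h : (0 : rat) <= i%:R by exact: ler0n. apply/negP => /eqP; lra. Qed.

Lemma binomz0 x : binomz x 0 = 1.
Proof. by rewrite /binomz big_ord0 divr1. Qed.

Lemma binomzS x i : binomz x i.+1 = binomz x i * (x%:~R - i%:R) / i.+1%:R.
Proof.
rewrite /binomz big_ord_recr /= factS natrM.
rewrite [(x - _)%:~R]rmorphB /=.
have h1 := fact_neq0 i; have h2 := nat1_neq0 i.
field. by rewrite h1 onep_neq0.
Qed.

Lemma binomz_shift x i : binomz (x + 1) i.+1 = binomz x i * (x%:~R + 1) / i.+1%:R.
Proof.
rewrite /binomz big_ord_recl /= factS natrM.
have -> : \prod_(j < i) ((x + 1 - (lift ord0 j)%:Z)%:~R : rat)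
   = \prod_(j < i) ((x - j%:Z)%:~R).
  apply: eq_bigr => j _; congr (_%:~R); rewrite lift0 /= -addn1 PoszD; ring.
rewrite -[Posz 0]/(0:int) subr0 rmorphD /=.
have h1 := fact_neq0 i.
field. by rewrite h1 onep_neq0.
Qed.

Lemma binomz_pascal x i : binomz (x + 1) i.+1 = binomz x i.+1 + binomz x i.
Proof.
rewrite binomz_shift binomzS.
have h2 := nat1_neq0 i.
field. by rewrite onep_neq0.
Qed.

Lemma binomz_nat (n k : nat) : binomz n%:Z k = cb n k.
Proof.
elim: k => [|k IH]; first by rewrite binomz0 /cb bin0.
rewrite binomzS IH /cb.
have h := nat1_neq0 k.
have e : ('C(n, k.+1))%:R = ('C(n,k))%:R * (n - k)%:R / (k.+1)%:R :> rat.
  by rewrite -natrM mulnC -mul_bin_left natrM mulrC mulKf.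
rewrite e.
case: (leqP k n) => hk.
  by rewrite natrB.
by rewrite bin_small // !mul0r.
Qed.

Definition Aint (x : int) (j : nat) : rat := \sum_(0 <= i < j.+1) binomz x i.

Lemma Aint_rec y j : Aint (y + 1) j = 2 * Aint y j - binomz y j.
Proof.
rewrite /Aint; elim: j => [|j IH].
  by rewrite !big_nat1 !binomz0; ring.
rewrite big_nat_recr //= IH binomz_pascal [in RHS]big_nat_recr //=; ring.
Qed.

Lemma cb_neq0 N j : (j <= N)%N -> cb N j != 0.
Proof. by move=> h; rewrite /cb pnatr_eq0 -lt0n bin_gt0. Qed.

Definition Sm (n m : nat) : rat :=
  \sum_(0 <= j < n.+1) \sum_(0 <= i < j.+1)
      binomz ((2 * n + 2)%:Z - m%:Z) i / binomz (2 * n + 1)%N j.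

Definition Tm (n m : nat) : rat :=
  \sum_(0 <= j < n.+1) binomz ((2 * n + 1)%:Z - m%:Z) j / cb (2 * n + 1) j.

Lemma S_rec n m : Sm n m = 2 * Sm n m.+1 - Tm n m.
Proof.
rewrite /Sm /Tm mulr_sumr -sumrB; apply: eq_bigr => j _.
rewrite -!mulr_suml binomz_nat.
have -> : (2 * n + 2)%:Z - m%:Z = ((2 * n + 2)%:Z - (m.+1)%:Z) + 1.
  lia.
rewrite -[\sum_(0 <= i < j.+1) binomz (_ + 1) i]/(Aint _ j) Aint_rec /Aint.
have -> : (2 * n + 2)%:Z - (m.+1)%:Z = (2 * n + 1)%:Z - m%:Z.
  lia.
ring.
Qed.

Lemma T_closed n m :
  (m.+1)%:R * Tm n m = 2 * (n.+1)%:R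
     - (n.+1)%:R * (binomz ((2 * n + 1)%:Z - m%:Z) n.+1 / cb (2 * n + 1) n.+1).
Proof.
set x := (2 * n + 1)%:Z - m%:Z.
set N := (2 * n + 1)%N.
pose f (j : nat) : rat := binomz x j * ((N.+1)%:R - j%:R) / cb N j.
have step : forall j, (j < n.+1)%N ->
    (- (m.+1)%:R) * (binomz x j / cb N j) = f j.+1 - f j.
  move=> j hj.
  have hjN : (j.+1 <= N)%N by rewrite /N; lia.
  have c0 : cb N j != 0 by apply: cb_neq0; lia.
  have c1 : cb N j.+1 != 0 by apply: cb_neq0.
  have e : cb N j.+1 = cb N j * (N%:R - j%:R) / j.+1%:R.
    by rewrite -!binomz_nat binomzS.
  have hx : x%:~R = N%:R - m%:R :> rat by rewrite /x rmorphB.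
  rewrite /f binomzS e hx.
  have d : N%:R - j%:R != 0 :> rat.
    rewrite -natrB; last lia. rewrite pnatr_eq0; lia.
  have h1 := nat1_neq0 j.
  rewrite -[N.+1]addn1 natrD.
  field. by rewrite c0 d onep_neq0.
have tel := @telescope_sumr_eq _ 0 n.+1 f
   (fun j => (- (m.+1)%:R) * (binomz x j / cb N j)) (leq0n _)
   (fun k hk => step k (proj2 (andP hk))).
rewrite /Tm mulr_sumr -/x -/N.
have -> : \sum_(0 <= j < n.+1) (m.+1)%:R * (binomz x j / cb N j) = - (f n.+1 - f 0).
  rewrite -tel -sumrN; apply: eq_bigr => j _; by rewrite mulNr opprK.
rewrite /f binomz0 /cb bin0 subr0 divr1 mul1r.
have -> : (N.+1)%:R - (n.+1)%:R = (n.+1)%:R :> rat.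
  rewrite -natrB; last (rewrite /N; lia). congr (_%:R); rewrite /N; lia.
have -> : (N.+1)%:R = 2 * (n.+1)%:R :> rat.
  rewrite -[2]/(2%:R) -natrM; congr (_%:R); rewrite /N; lia.
rewrite -/(cb N n.+1). ring.
Qed.

Definition Rm (n m : nat) : rat :=
  (n.+1)%:R / 2 ^+ m.+1 *
    (2 * harm (2 * n + 1) - harm n
     - \sum_(1 <= k < m.+1)
         (2 ^+ k.+1 / k%:R *
          (binomz ((2 * n + 2)%:Z - k%:Z) n.+1 / binomz (2 * n + 2)%N n.+1 - 1))).

Lemma two_neq0 : (2 : rat) != 0. Proof. by []. Qed.

Lemma cb_central n : cb (2 * n + 2) n.+1 = 2 * cb (2 * n + 1) n.+1.
Proof.
rewrite /cb -[2]/(2%:R) -natrM; congr (_%:R).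
have -> : (2 * n + 2 = (2 * n + 1).+1)%N by lia.
have e : 'C(2 * n + 1, n) = 'C(2 * n + 1, n.+1).
  rewrite -(@bin_sub (2 * n + 1) n.+1); last lia.
  congr 'C(_, _); lia.
rewrite binS e; lia.
Qed.

Lemma T_val n m :
  Tm n m = - 2 * (n.+1)%:R / (m.+1)%:R *
     (binomz ((2 * n + 2)%:Z - (m.+1)%:Z) n.+1 / cb (2 * n + 2) n.+1 - 1).
Proof.
have h := T_closed n m.
have -> : (2 * n + 2)%:Z - (m.+1)%:Z = (2 * n + 1)%:Z - m%:Z by lia.
rewrite cb_central.
have hm := nat1_neq0 m.
have c0 : cb (2 * n + 1) n.+1 != 0 by apply: cb_neq0; lia.
apply: (mulfI hm). rewrite h. field. by move: c0; rewrite /cb => ->; rewrite onep_neq0.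
Qed.

Lemma D_rec n m : Sm n m.+1 - Rm n m.+1 = (Sm n m - Rm n m) / 2.
Proof.
have hS := S_rec n m.
have hT := T_val n m.
have hm := nat1_neq0 m.
rewrite /Rm big_nat_recr //= -/(Rm n m).
rewrite hS hT /Rm exprS !binomz_nat.
set c := binomz _ n.+1 / cb _ n.+1.
set s := \sum_(_ <= _ < _) _. set p := 2 ^+ m.+1. have hp : p != 0 by rewrite expf_neq0. clear hS hT. clearbody c s p. move: (Sm n m.+1) (harm (2 * n + 1)) (harm n) => S a b. field. by rewrite hp onep_neq0.
Qed.

Lemma cbE n k : (k <= n)%N -> cb n k = (n`!)%:R / ((k`!)%:R * ((n - k)`!)%:R).
Proof.
move=> h; rewrite /cb -(bin_fact h) !natrM mulrK //.
by rewrite unitfE mulf_neq0 // fact_neq0.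
Qed.

Lemma cb_small n k : (n < k)%N -> cb n k = 0.
Proof. by move=> h; rewrite /cb bin_small. Qed.

Lemma Aint_nat_rec (M j : nat) : Aint (M.+1)%:Z j = 2 * Aint M%:Z j - cb M j.
Proof. by rewrite -binomz_nat -Aint_rec; congr Aint; lia. Qed.

Lemma AintS x j : Aint x j.+1 = Aint x j + binomz x j.+1.
Proof. by rewrite /Aint big_nat_recr. Qed.

Lemma Aint_full (M : nat) : Aint M%:Z M = 2 ^+ M.
Proof.
elim: M => [|M IH]; first by rewrite /Aint big_nat1 binomz0.
rewrite AintS Aint_nat_rec IH binomz_nat /cb !binn exprS; ring.
Qed.

Lemma P_lemma (s a : nat) :
  \sum_(0 <= k < a.+1) 2 ^+ k * cb (a + s - k) s = Aint (a + s).+1%:Z a.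
Proof.
elim: a => [|a IH].
  by rewrite big_nat1 /Aint big_nat1 binomz0 add0n subn0 /cb binn expr0 mulr1.
rewrite big_nat_recl // expr0 mul1r.
have -> : \sum_(0 <= i < a.+1) 2 ^+ i.+1 * cb (a.+1 + s - i.+1) s
        = 2 * \sum_(0 <= k < a.+1) 2 ^+ k * cb (a + s - k) s.
  rewrite mulr_sumr; apply: eq_bigr => i _.
  rewrite exprS (_ : (a.+1 + s - i.+1 = a + s - i)%N); last lia. ring.
rewrite IH (_ : ((a.+1 + s).+1 = (a + s).+2)%N); last lia.
rewrite [Aint (Posz (a + s).+2) _]Aint_nat_rec AintS binomz_nat.
have -> : cb (a + s).+1 a.+1 = cb (a.+1 + s - 0) s.
  rewrite /cb -bin_sub; last lia. congr (_%:R); congr 'C(_, _); lia.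
ring.
Qed.

Lemma ratio_lemma N j k : (k <= j)%N -> (j <= N)%N ->
  cb (N - k) (N - j) / cb N j = cb j k / cb N k.
Proof.
move=> hkj hjN.
rewrite !cbE; try lia.
have -> : (N - k - (N - j) = j - k)%N by lia.
have f1 := fact_neq0 N. have f2 := fact_neq0 (N - j). have f3 := fact_neq0 (j - k).
have f4 := fact_neq0 j. have f5 := fact_neq0 k. have f6 := fact_neq0 (N - k).
field. by rewrite f1 f2 f3 f4 f5 f6.
Qed.

Definition Qs (a b : nat) : rat := \sum_(0 <= k < a.+1) 2 ^+ k * cb a k / cb b k.

Lemma Q_val a b : (a <= b)%N -> Qs a b = Aint (b.+1)%:Z a / cb b a.
Proof.
move=> hab.
have := P_lemma (b - a) a.
rewrite (_ : (a + (b - a) = b)%N); last lia.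
move=> <-. rewrite mulr_suml /Qs; apply: eq_big_nat => k /andP[_ hk].
rewrite -!mulrA ratio_lemma //; lia.
Qed.

Lemma hockey n k : \sum_(0 <= j < n.+1) cb j k = cb n.+1 k.+1.
Proof.
elim: n => [|n IH].
  by rewrite big_nat1 /cb binS (@bin_small 0 k.+1) // add0n.
by rewrite big_nat_recr //= IH /cb [in RHS]binS natrD.
Qed.

Lemma S0_single n :
  Sm n 0 = \sum_(0 <= k < n.+1) 2 ^+ k * cb n.+1 k.+1 / cb (2 * n + 1) k.
Proof.
rewrite /Sm.
have e : forall j, (j < n.+1)%N ->
   \sum_(0 <= i < j.+1) binomz ((2 * n + 2)%:Z - 0%:Z) i / binomz (2 * n + 1)%N j
   = \sum_(0 <= k < n.+1) 2 ^+ k * cb j k / cb (2 * n + 1) k.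
  move=> j hj.
  rewrite -mulr_suml -[\sum_(0 <= i < j.+1) _]/(Aint _ j) binomz_nat.
  have -> : (2 * n + 2)%:Z - 0%:Z = ((2 * n + 1).+1)%:Z by lia.
  rewrite -Q_val; last lia.
  rewrite /Qs (@big_cat_nat _ _ _ j.+1 0 n.+1) //=.
  rewrite [X in _ = _ + X]big1_seq ?addr0 // => k /andP[_].
  rewrite mem_index_iota => /andP[hk _].
  by rewrite cb_small // mulr0 mul0r.
rewrite (eq_big_nat _ _ (fun j hj => e j (proj2 (andP hj)))) exchange_big_nat; apply: eq_bigr => k _.
rewrite -hockey mulr_sumr mulr_suml; apply: eq_bigr => j _; ring.
Qed.

Definition Fs (p q : nat) : rat := \sum_(1 <= k < p.+1) 2 ^+ k / k%:R * cb p k / cb q k.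

Lemma cb_diag M k : cb M.+1 k.+1 = cb M k * (M.+1)%:R / (k.+1)%:R.
Proof.
have h := nat1_neq0 k.
rewrite /cb; apply: (mulfI h).
rewrite -[in LHS]natrM -mul_bin_diag /= natrM. field. by rewrite onep_neq0.
Qed.

Lemma S0_F n : Sm n 0 = (n.+1)%:R * Fs n.+1 (2 * n + 2).
Proof.
rewrite S0_single /Fs big_add1 /= mulr_sumr; apply: eq_big_nat => k /andP[_ hk].
rewrite (_ : (2 * n + 2 = (2 * n + 1).+1)%N); last lia.
rewrite [cb (2 * n + 1).+1 _]cb_diag exprS.
have c0 : cb (2 * n + 1) k != 0 by apply: cb_neq0; lia.
have h := nat1_neq0 k.
have -> : ((2 * n + 1).+1)%:R = 2 * (n.+1)%:R :> rat.
  rewrite -[2]/(2%:R) -natrM; congr (_%:R); lia.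
set X := 2 ^+ k. set Y := cb n.+1 k.+1.
field. by rewrite c0 !onep_neq0.
Qed.

Lemma cb_step q k : cb q k.+1 = cb q k * (q%:R - k%:R) / (k.+1)%:R.
Proof. by rewrite -!binomz_nat binomzS. Qed.

Lemma Qs_split p q : Qs p q = 1 + \sum_(0 <= k < p) 2 ^+ k.+1 * cb p k.+1 / cb q k.+1.
Proof. by rewrite /Qs big_nat_recl // expr0 mul1r /cb !bin0 divr1. Qed.

Lemma Fs_split p q : Fs p q = \sum_(0 <= k < p) 2 ^+ k.+1 / k.+1%:R * cb p k.+1 / cb q k.+1.
Proof. by rewrite /Fs big_add1. Qed.

Lemma F1 p q : (p <= q)%N -> Fs p q - Fs p q.+1 = (Qs p q - 1) / (q.+1)%:R.
Proof.
move=> hpq.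
rewrite Qs_split !Fs_split (addrC 1) addrK -sumrB mulr_suml.
apply: eq_big_nat => k /andP[_ hk].
rewrite cb_diag !cb_step.
have c0 : cb q k != 0 by apply: cb_neq0; lia.
have d : q%:R - k%:R != 0 :> rat by rewrite -natrB; [rewrite pnatr_eq0; lia | lia].
have h1 := nat1_neq0 k. have h2 := nat1_neq0 q.
set X := 2 ^+ k.+1. set Y := cb p k.+1.
move: c0; set C := cb q k => c0.
field. by rewrite c0 d !onep_neq0.
Qed.

Lemma F2 p q : (p < q)%N -> Fs p.+1 q - Fs p q = (Qs p.+1 q - 1) / (p.+1)%:R.
Proof.
move=> hpq.
rewrite Qs_split !Fs_split (addrC 1) addrK.
have -> : \sum_(0 <= k < p) 2 ^+ k.+1 / k.+1%:R * cb p k.+1 / cb q k.+1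
   = \sum_(0 <= k < p.+1) 2 ^+ k.+1 / k.+1%:R * cb p k.+1 / cb q k.+1.
  by rewrite big_nat_recr //= (@cb_small p p.+1 (ltnSn p)) mulr0 mul0r addr0.
rewrite -sumrB mulr_suml.
apply: eq_big_nat => k /andP[_ hk].
rewrite [in RHS]cb_diag [cb p.+1 _]/cb binS natrD -/(cb p k.+1) -/(cb p k).
have c0 : cb q k.+1 != 0 by apply: cb_neq0; lia.
have h1 := nat1_neq0 k. have h2 := nat1_neq0 p.
set X := 2 ^+ k.+1.
move: c0; set C := cb q k.+1 => c0.
field. by rewrite c0 !onep_neq0.
Qed.

Lemma Aint_cb (M j : nat) : Aint M%:Z j = \sum_(0 <= i < j.+1) cb M i.
Proof. by rewrite /Aint; apply: eq_bigr => i _; rewrite binomz_nat. Qed.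

Lemma A_half p : Aint (2 * p + 1)%:Z p = 2 ^+ (2 * p).
Proof.
have full := Aint_full (2 * p + 1).
rewrite Aint_cb in full.
rewrite (@big_cat_nat _ _ _ p.+1 0 (2 * p + 1).+1) //= in full; last lia.
have e : \sum_(p.+1 <= i < (2 * p + 1).+1) cb (2 * p + 1) i
       = \sum_(0 <= i < p.+1) cb (2 * p + 1) i.
  rewrite -{1}[p.+1]add0n big_addn.
  rewrite (_ : ((2 * p + 1).+1 - p.+1 = p.+1)%N); last lia.
  rewrite big_nat_rev /= add0n.
  apply: eq_big_nat => i /andP[_ hi].
  rewrite /cb -bin_sub; last lia. congr (_%:R); congr 'C(_, _); lia.
rewrite e -Aint_cb in full.
have : 2 * Aint (2 * p + 1)%:Z p = 2 * 2 ^+ (2 * p).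
  rewrite -exprS (_ : ((2 * p).+1 = 2 * p + 1)%N); last lia.
  by rewrite -full; ring.
by move/(mulfI two_neq0).
Qed.

Lemma harmS n : harm n.+1 = harm n + (n.+1)%:R^-1.
Proof. by rewrite /harm big_nat_recr. Qed.

Lemma F_central p : Fs p (2 * p) = harm (2 * p) - harm p / 2.
Proof.
elim: p => [|p IH].
  by rewrite /Fs /harm !big_geq // mul0r subr0.
have E1 := @F1 p.+1 (2 * p + 1) ltac:(lia).
have E2 := @F2 p (2 * p + 1) ltac:(lia).
have E3 := @F1 p (2 * p) ltac:(lia).
have Q1 := @Q_val p (2 * p) ltac:(lia).
have Q2 := @Q_val p.+1 (2 * p + 1) ltac:(lia).
rewrite (_ : (2 * p).+1 = 2 * p + 1)%N in Q1 E3; last lia.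
rewrite A_half in Q1.
rewrite Aint_nat_rec AintS binomz_nat A_half in Q2.
have cd := cb_diag (2 * p) p.
rewrite (_ : (2 * p).+1 = 2 * p + 1)%N in cd; last lia.
rewrite cd in Q2.
have F0 : Fs p.+1 (2 * p + 1).+1 = Fs p.+1 (2 * p + 1) - (Qs p.+1 (2 * p + 1) - 1) / ((2 * p + 1).+1)%:R.
  by rewrite -E1 opprB addrC subrK.
have F0' : Fs p.+1 (2 * p + 1) = Fs p (2 * p + 1) + (Qs p.+1 (2 * p + 1) - 1) / (p.+1)%:R.
  by rewrite -E2 addrC subrK.
have F0'' : Fs p (2 * p + 1) = Fs p (2 * p) - (Qs p (2 * p) - 1) / ((2 * p + 1))%:R.
  by rewrite -E3 opprB addrC subrK.
rewrite (_ : (2 * p.+1 = (2 * p + 1).+1)%N); last lia.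
rewrite F0 F0' F0'' IH Q1 Q2 !harmS.
rewrite (_ : (2 * p + 1 = (2 * p).+1)%N); last lia.
rewrite harmS.
have C0 : cb (2 * p) p != 0 by apply: cb_neq0; lia.
set X := 2 ^+ (2 * p). move: C0. set C := cb (2 * p) p => C0.
set h1 := harm (2 * p). set h2 := harm p.
clear IH E1 E2 E3 Q1 Q2 F0 F0' F0'' cd. clearbody X C h1 h2.
have hp : (0:rat) <= p%:R := ler0n _ p.
field. rewrite C0 andbT; apply/and3P; split; apply/eqP => h; lra.
Qed.

Lemma base n : Sm n 0 = Rm n 0.
Proof.
rewrite S0_F (_ : (2 * n + 2 = 2 * n.+1)%N); last lia.
rewrite F_central /Rm big_geq // subr0 expr1.
rewrite (_ : (2 * n.+1 = (2 * n + 1).+1)%N); last lia.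
rewrite !harmS.
set a := harm (2 * n + 1). set b := harm n.
have hp : (0:rat) <= n%:R := ler0n _ n.
clearbody a b.
field. apply/andP; split; apply/eqP => h; lra.
Qed.

Lemma all_m n m : Sm n m = Rm n m.
Proof.
suff : Sm n m - Rm n m = 0 by move/eqP; rewrite subr_eq0 => /eqP.
elim: m => [|m IH]; first by rewrite base subrr.
by rewrite D_rec IH mul0r.
Qed.

Theorem mainTheorem8 (n m : nat) :
  \sum_(0 <= j < n.+1) \sum_(0 <= i < j.+1)
      binomz ((2 * n + 2)%:Z - m%:Z) i / binomz (2 * n + 1)%N j
  = (n.+1)%:R / 2 ^+ m.+1 *
    (2 * harm (2 * n + 1) - harm n
     - \sum_(1 <= k < m.+1)
         (2 ^+ k.+1 / k%:R *
          (binomz ((2 * n + 2)%:Z - k%:Z) n.+1 / binomz (2 * n + 2)%N n.+1 - 1))).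
Proof. exact: all_m. Qed.
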